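(* Let $n,d\in\mathbb N$, let $\{\varepsilon_k^j\}_{1\le j\le n,\,1\le k\le d}$ be independent Rademacher random variables on a probability space $(\Omega,\Sigma,P)$, and for $z\in\mathbb C^d$, $t\in\Omega$ put $F(z,t)=\prod_{j=1}^n\sum_{k=1}^d\varepsilon_k^j(t)z_k$ and $\|F(\cdot,t)\|=\sup_{\|u\|_\infty=1}|F(u,t)|$. Then for every $R>0$, $$P(\|F(\cdot,t)\|>2R)<(24n)^d\,\frac{d^n}{R^2}.$$
   Context: A Rademacher random variable takes values $1$ and $-1$ each with probability $1/2$. $\|\cdot\|_\infty$ is the sup norm on $\mathbb C^d$. *)

(* Defs.v *)
From HB Require Import structures.
From mathcomp Require Import all_boot all_order all_algebra.
From mathcomp Require Import all_classical all_reals all_analysis.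
From mathcomp Require Import complex.
Set Implicit Arguments. Unset Strict Implicit. Unset Printing Implicit Defensive.
Import Order.TTheory GRing.Theory Num.Theory.
Local Open Scope classical_set_scope.
Local Open Scope ring_scope.

Definition mutually_independent {d} {T : measurableType d} {R : realType}
  (P : probability T R) (I : finType) (X : I -> T -> R) : Prop :=
  forall (J : {set I}) (B : I -> set R), (forall i, measurable (B i)) ->
    P (\bigcap_(i in [set i | i \in J]) (X i @^-1` B i)) =
    (\prod_(i in J) P (X i @^-1` B i))%E.

Definition rademacher {d} {T : measurableType d} {R : realType}
  (P : probability T R) (X : T -> R) : Prop :=
  P (X @^-1` [set 1]) = (2^-1)%:E /\ P (X @^-1` [set -1]) = (2^-1)%:E.

Definition supnormC {R : realType} {d : nat} (u : 'I_d -> R[i]) : R :=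
  \big[Num.max/0]_(k < d) ComplexField.Normc.normc (u k).

Definition Fpoly {T : Type} {R : realType} {n d : nat}
  (eps : 'I_n -> 'I_d -> T -> R) (z : 'I_d -> R[i]) (t : T) : R[i] :=
  \prod_(j < n) \sum_(k < d) (real_complex R (eps j k t) * z k).

Definition Fnorm {T : Type} {R : realType} {n d : nat}
  (eps : 'I_n -> 'I_d -> T -> R) (t : T) : R :=
  sup [set ComplexField.Normc.normc (Fpoly eps u t) | u in [set u : 'I_d -> R[i] | supnormC u = 1]].

(* Main.v *)
Require Import Defs.
From HB Require Import structures.
From mathcomp Require Import all_boot all_order all_algebra.
From mathcomp Require Import all_classical all_reals all_analysis.
From mathcomp Require Import complex.
From mathcomp Require Import ring lra zify.
Import Order.TTheory GRing.Theory Num.Theory.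
Local Open Scope classical_set_scope.
Local Open Scope ring_scope.
Local Open Scope complex_scope.
Import ComplexField.Normc.
Set Implicit Arguments. Unset Strict Implicit.

Lemma normcC (R : realType) (z : R[i]) : `|z| = ((normc z)%:C)%C.
Proof. by []. Qed.

Lemma lec_normc (R : realType) (z : R[i]) (a : R) : (`|z| <= a%:C)%C = (normc z <= a).
Proof. by rewrite normcC lecR. Qed.

Lemma normc_ge0 (R : realType) (z : R[i]) : 0 <= normc z.
Proof. by have := normr_ge0 z; rewrite normcC -[0 : R[i]]/((0:R)%:C)%C lecR. Qed.

Lemma supnorm_le (R : realType) d (u : 'I_d -> R[i]) k : normc (u k) <= supnormC u.
Proof. rewrite /supnormC. exact: (le_bigmax (0:R) (fun k => normc (u k)) k). Qed.

Lemma supnorm_leP (R : realType) d (u : 'I_d -> R[i]) (a : R) : 0 <= a -> (forall k, normc (u k) <= a) -> supnormC u <= a.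
Proof. move=> a0 h. rewrite /supnormC. apply: (bigmax_le _ a0) => i _ ; exact: h. Qed.

Lemma supnorm1_le (R : realType) d (u : 'I_d -> R[i]) k : supnormC u = 1 -> `|u k| <= 1.
Proof. move=> h; rewrite -[1]/((1:R)%:C)%C lec_normc -h; exact: supnorm_le. Qed.

(* telescoping *)
Lemma prod_diff_le (V : numDomainType) m (a b : 'I_m -> V) (M : V) :
  1 <= M -> (forall j, `|a j| <= M) -> (forall j, `|b j| <= M) ->
  `|\prod_j a j - \prod_j b j| <= M ^+ m * \sum_j `|a j - b j|.
Proof.
move=> M1 ha hb; have M0 : 0 <= M by apply: le_trans M1.
elim: m a b ha hb => [|m IH] a b ha hb.
  by rewrite !big_ord0 subrr normr0 mulr0.
rewrite !big_ord_recr /=.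
have -> : \prod_(i < m) a (widen_ord (leqnSn m) i) * a ord_max -
  \prod_(i < m) b (widen_ord (leqnSn m) i) * b ord_max =
  (\prod_(i < m) a (widen_ord (leqnSn m) i) - \prod_(i < m) b (widen_ord (leqnSn m) i)) * a ord_max +
  \prod_(i < m) b (widen_ord (leqnSn m) i) * (a ord_max - b ord_max) by ring.
apply: le_trans (ler_normD _ _) _.
rewrite !normrM exprSr mulrDr.
apply: lerD.
  rewrite -mulrA [M * _]mulrC mulrA; apply: ler_pM; try by [].
  exact: IH.
have hbm : `|\prod_(i < m) b (widen_ord (leqnSn m) i)| <= M ^+ m.
  have -> : M ^+ m = \prod_(i < m) M by rewrite prodr_const card_ord.
  rewrite normr_prod; apply: ler_prod => i _; rewrite normr_ge0; exact: hb.
apply: ler_pM => //; apply: le_trans hbm _.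
by rewrite ler_peMr // exprn_ge0.
Qed.

Definition Fv {R : realType} {n d : nat} (e : 'I_n -> 'I_d -> R) (u : 'I_d -> R[i]) : R[i] :=
  \prod_(j < n) \sum_(k < d) (real_complex R (e j k) * u k).
Definition Gv {R : realType} {n d : nat} (e : 'I_n -> 'I_d -> R) : R :=
  sup [set normc (Fv e u) | u in [set u : 'I_d -> R[i] | supnormC u = 1]].
Definition Kb {R : realType} {n d : nat} (e : 'I_n -> 'I_d -> R) : R :=
  \prod_(j < n) \sum_(k < d) `|e j k|.
Definition Mb {R : realType} {n d : nat} (e : 'I_n -> 'I_d -> R) : R :=
  1 + \sum_(j < n) \sum_(k < d) `|e j k|.

Lemma normcR (R : realType) (x : R) : `|(x%:C)%C| = (`|x|%:C)%C.
Proof. by rewrite normcC /normc /= expr0n /= addr0 sqrtr_sqr. Qed.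

Lemma normcRR (R : realType) (x : R) : normc ((x%:C)%C) = `|x|.
Proof. by rewrite /normc /= expr0n /= addr0 sqrtr_sqr. Qed.

Lemma Fv_bound (R : realType) n d (e : 'I_n -> 'I_d -> R) u :
  (forall k, `|u k| <= 1) -> normc (Fv e u) <= Kb e.
Proof.
move=> hu; rewrite -lec_normc /Fv /Kb normr_prod rmorph_prod; apply: ler_prod => j _.
rewrite normr_ge0 /= rmorph_sum; apply: le_trans (ler_norm_sum _ _ _) _.
apply: ler_sum => k _; rewrite normrM normcR; apply: ler_piMr => //.
by rewrite -normcR normr_ge0.
Qed.

Definition u1 {R : realType} d : 'I_d -> R[i] := fun _ => 1.
Arguments u1 {R} d.

Lemma supnorm_u1 (R : realType) d : (0 < d)%N -> supnormC (@u1 R d) = 1.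
Proof.
move=> hd; apply/le_anti/andP; split.
  by apply: supnorm_leP => // k; rewrite /u1 normc1.
by have := supnorm_le (@u1 R d) (Ordinal hd); rewrite /u1 normc1.
Qed.

Lemma has_sup_Gv (R : realType) n d (e : 'I_n -> 'I_d -> R) : (0 < d)%N ->
  has_sup [set normc (Fv e u) | u in [set u : 'I_d -> R[i] | supnormC u = 1]].
Proof.
move=> hd; split.
  by exists (normc (Fv e (u1 d))); exists (u1 d) => //; exact: supnorm_u1.
exists (Kb e) => _ [u /= hu <-]; apply: Fv_bound => k; exact: supnorm1_le.
Qed.

Lemma Gv_ge (R : realType) n d (e : 'I_n -> 'I_d -> R) u : (0 < d)%N ->
  supnormC u = 1 -> normc (Fv e u) <= Gv e.
Proof. by move=> hd hu; apply: sup_upper_bound (has_sup_Gv e hd) _ _; exists u. Qed.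

Lemma Gv_ge0 (R : realType) n d (e : 'I_n -> 'I_d -> R) : (0 < d)%N -> 0 <= Gv e.
Proof. move=> hd; exact: le_trans (normc_ge0 _) (Gv_ge e hd (supnorm_u1 R hd)). Qed.

Lemma Gv_ge_ball (R : realType) n d (e : 'I_n -> 'I_d -> R) q : (0 < n)%N -> (0 < d)%N ->
  (forall k, `|q k| <= 1) -> normc (Fv e q) <= Gv e.
Proof.
move=> hn hd hq.
have [k0 _ hk0] := eq_bigmax (Ordinal hd) predT (fun k => normc (q k)) isT (fun k _ => normc_ge0 (q k)).
set s := supnormC q.
have s1 : s <= 1 by apply: supnorm_leP => // k; rewrite -lec_normc.
have s0 : 0 <= s by apply: le_trans (supnorm_le q k0); exact: normc_ge0.
have hsk : s = normc (q k0) by [].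
have [sz|sp] := eqVneq s 0.
  have q0 : forall k, q k = 0.
    move=> k; apply: eq0_normc; apply/le_anti/andP; split; last exact: normc_ge0.
    by rewrite -sz; exact: supnorm_le.
  have -> : Fv e q = 0.
    rewrite /Fv (eq_bigr (fun _ => 0)); last first.
      by move=> j _; rewrite big1 // => k _; rewrite q0 mulr0.
    by rewrite prodr_const card_ord expr0n; move: hn; rewrite lt0n => /negPf ->.
  by rewrite normc0; exact: Gv_ge0.
have spos : 0 < s by rewrite lt_def sp s0.
pose u := fun k => ((s^-1)%:C)%C * q k.
have hu : supnormC u = 1.
  apply/le_anti/andP; split.
    apply: supnorm_leP => // k; rewrite /u normcM normcRR.
    rewrite ger0_norm ?invr_ge0 //; rewrite -[X in _ <= X](mulVf sp).
    by apply: ler_wpM2l; [rewrite invr_ge0|exact: supnorm_le].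
  have := supnorm_le u k0; apply: le_trans.
  by rewrite /u normcM normcRR ger0_norm ?invr_ge0 // -hsk mulVf.
have -> : Fv e q = ((s%:C)%C) ^+ n * Fv e u.
  have -> : ((s%:C)%C) ^+ n = \prod_(j < n) (s%:C)%C by rewrite prodr_const card_ord.
  rewrite /Fv -big_split /=; apply: eq_bigr => j _.
  rewrite mulr_sumr; apply: eq_bigr => k _; rewrite /u.
  have hC : (s%:C)%C != 0 by rewrite (inj_eq (@complexI _)).
  by rewrite fmorphV; field.
rewrite normcM; apply: le_trans (Gv_ge e hd hu).
have -> : normc ((s%:C)%C ^+ n) = s ^+ n.
  by apply: (@complexI R); rewrite -normcC normrX normcR ger0_norm // rmorphXn.
apply: ler_piMl; first exact: normc_ge0.
by apply: exprn_ile1.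
Qed.

Lemma row_le_Mb (R : realType) n d (e : 'I_n -> 'I_d -> R) j : \sum_k `|e j k| <= Mb e.
Proof.
rewrite /Mb (bigD1 j) //=.
have : 0 <= \sum_(i < n | i != j) \sum_(k < d) `|e i k| by apply: sumr_ge0 => i _; apply: sumr_ge0.
lra.
Qed.

Lemma Mb_ge1 (R : realType) n d (e : 'I_n -> 'I_d -> R) : 1 <= Mb e.
Proof.
rewrite /Mb; have : 0 <= \sum_(i < n) \sum_(k < d) `|e i k| by apply: sumr_ge0 => i _; apply: sumr_ge0.
lra.
Qed.

Lemma rowC_le (R : realType) n d (e : 'I_n -> 'I_d -> R) (u : 'I_d -> R[i]) j (c : R) :
  (forall k, `|u k| <= c%:C) ->
  `|\sum_k (real_complex R (e j k) * u k)| <= ((\sum_k `|e j k|) * c)%:C.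
Proof.
move=> hu; apply: le_trans (ler_norm_sum _ _ _) _.
rewrite mulr_suml rmorph_sum; apply: ler_sum => k _.
by rewrite normrM normcR rmorphM; apply: ler_wpM2l => //; rewrite -normcR.
Qed.

Lemma Fv_lip (R : realType) n d (e : 'I_n -> 'I_d -> R) (u q : 'I_d -> R[i]) (δ : R) :
  0 <= δ ->
  (forall k, `|u k| <= 1) -> (forall k, `|q k| <= 1) ->
  (forall k, `|u k - q k| <= δ%:C) ->
  normc (Fv e u - Fv e q) <= Mb e ^+ n * (Mb e * δ *+ n).
Proof.
move=> δ0 hu hq hd.
have hab : forall (w : 'I_d -> R[i]), (forall k, `|w k| <= 1) ->
   forall j, `|\sum_k (real_complex R (e j k) * w k)| <= (Mb e)%:C.
  move=> w hw j; apply: le_trans (@rowC_le R n d e w j 1 hw) _.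
  by rewrite mulr1 lecR row_le_Mb.
rewrite -lec_normc /Fv.
apply: le_trans (prod_diff_le (M := (Mb e)%:C) _ (hab u hu) (hab q hq)) _.
  by rewrite -[1 : R[i]]/((1:R)%:C)%C lecR Mb_ge1.
rewrite rmorphM rmorphXn; apply: ler_wpM2l.
  by rewrite exprn_ge0 // -[0 : R[i]]/((0:R)%:C)%C lecR; apply: le_trans (Mb_ge1 e).
rewrite rmorphMn.
have -> : ((Mb e * δ)%:C *+ n) = \sum_(j < n) (Mb e * δ)%:C by rewrite sumr_const card_ord.
apply: ler_sum => j _.
rewrite -sumrB.
have -> : \sum_(i < d) ((e j i)%:C%C * u i - (e j i)%:C%C * q i) =
   \sum_(i < d) ((e j i)%:C%C * (u i - q i)).
  by apply: eq_bigr => k _; rewrite mulrBr.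
apply: le_trans (@rowC_le R n d e (fun k => u k - q k) j δ hd) _.
by rewrite lecR; apply: ler_wpM2r => //; exact: row_le_Mb.
Qed.

Lemma rat_approx_pos (R : realType) (x δ : R) : 0 <= x -> 0 < δ ->
  exists r : rat, `|ratr r| <= `|x| /\ `|x - ratr r| < δ.
Proof.
move=> x0 d0; have [xd|dx] := ltP x δ.
  by exists 0; rewrite rmorph0 normr0 subr0 normr_ge0 ger0_norm.
have [r] := @rat_in_itvoo R (x - δ) x ltac:(lra).
rewrite in_itv /=; move=> /andP[h1 h2]; exists r.
have r0 : 0 <= ratr r :> R by lra.
rewrite (ger0_norm r0) (ger0_norm x0) ger0_norm; lra.
Qed.

Lemma rat_approx (R : realType) (x δ : R) : 0 < δ ->
  exists r : rat, `|ratr r| <= `|x| /\ `|x - ratr r| < δ.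
Proof.
move=> d0; have [x0|x0] := leP 0 x; first exact: rat_approx_pos.
have [r [h1 h2]] := @rat_approx_pos R (- x) δ ltac:(lra) d0.
exists (- r); rewrite rmorphN normrN -(normrN x); split => //.
by rewrite opprK; move: h2; rewrite -opprD normrN.
Qed.

Lemma normc_cplx (R : realType) (a b : R) : normc (a +i* b) <= `|a| + `|b|.
Proof.
have -> : a +i* b = a%:C + (0 +i* b) by rewrite /GRing.add /= addr0 add0r.
apply: le_trans (le_normcD _ _) _; rewrite normcRR; apply: lerD => //.
by rewrite /normc /= expr0n add0r sqrtr_sqr.
Qed.

Lemma normc_cplx_le (R : realType) (a b x y : R) : `|a| <= `|x| -> `|b| <= `|y| ->
  normc (a +i* b) <= normc (x +i* y).
Proof.
move=> ha hb; rewrite /normc; apply: ler_wsqrtr.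
rewrite -(real_normK (num_real a)) -(real_normK (num_real b)) -(real_normK (num_real x)) -(real_normK (num_real y)).
have := normr_ge0 a; have := normr_ge0 b; nra.
Qed.

Definition toC (R : realType) (p : rat * rat) : R[i] := (ratr p.1) +i* (ratr p.2).

Lemma cplx_approx (R : realType) (z : R[i]) (δ : R) : 0 < δ ->
  exists p : rat * rat, normc (toC R p) <= normc z /\ normc (z - toC R p) <= δ.
Proof.
move=> d0; case: z => x y.
have [a [ha1 ha2]] := @rat_approx R x (δ / 2) ltac:(lra).
have [b [hb1 hb2]] := @rat_approx R y (δ / 2) ltac:(lra).
exists (a, b); split; first exact: normc_cplx_le.
have -> : (x +i* y) - toC R (a, b) = (x - ratr a) +i* (y - ratr b) by [].
apply: le_trans (normc_cplx _ _) _; lra.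
Qed.

Definition qv (R : realType) d (p : {ffun 'I_d -> rat * rat}) : 'I_d -> R[i] :=
  fun k => toC R (p k).

Lemma normc_rev (R : realType) (x y : R[i]) : normc x - normc (x - y) <= normc y.
Proof.
have := le_normcD (x - y) y; rewrite subrK.
have := normc_ge0 y; lra.
Qed.

Lemma Gv_char (R : realType) n d (e : 'I_n -> 'I_d -> R) (a : R) : (0 < n)%N -> (0 < d)%N ->
  (a < Gv e) <-> exists p : {ffun 'I_d -> rat * rat},
     (forall k, normc (qv R p k) <= 1) /\ a < normc (Fv e (qv R p)).
Proof.
move=> hn hd; split; last first.
  move=> [p [hp1 hp2]]; apply: lt_le_trans hp2 _; apply: Gv_ge_ball => // k.
  by rewrite -[1 : R[i]]/((1:R)%:C) lec_normc.
move=> ha.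
have hg : 0 < Gv e - a by rewrite subr_gt0.
have [x [u /= hu <-] hx] := sup_adherent hg (has_sup_Gv e hd).
rewrite opprB addrCA subrr addr0 in hx.
set η := normc (Fv e u) - a.
have hη : 0 < η by rewrite /η subr_gt0.
set K := Mb e ^+ n * (Mb e *+ n).
have K0 : 0 <= K.
  by rewrite /K mulr_ge0 ?exprn_ge0 ?mulrn_wge0 //; apply: le_trans (Mb_ge1 e).
set δ := η / (2 * (K + 1)).
have hδ : 0 < δ by rewrite /δ divr_gt0 // mulr_gt0 //; lra.
have /fin_all_exists [f hf] : forall k : 'I_d, exists p : rat * rat,
    normc (toC R p) <= normc (u k) /\ normc (u k - toC R p) <= δ.
  by move=> k; apply: cplx_approx.
exists (finfun f).
have hq : forall k, normc (qv R (finfun f) k) <= 1.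
  move=> k; rewrite /qv ffunE; apply: le_trans (hf k).1 _.
  by rewrite -lec_normc; exact: supnorm1_le.
split => //.
have := @Fv_lip R n d e u (qv R (finfun f)) δ (ltW hδ) (fun k => supnorm1_le k hu)
  (fun k => ltac:(rewrite -[1 : R[i]]/((1:R)%:C) lec_normc; exact: hq k)) _.
have hKd : Mb e ^+ n * (Mb e * δ *+ n) = K * δ by rewrite /K -mulrnAl mulrA.
rewrite hKd.
have hKd2 : K * δ < η.
  have -> : K * δ = (K + 1) * δ - δ by ring.
  have -> : (K + 1) * δ = η / 2 by rewrite /δ; field; lra.
  lra.
move=> h; have {h} h : normc (Fv e u - Fv e (qv R (finfun f))) <= K * δ.
  by apply: h => k; rewrite lec_normc /qv ffunE; exact: (hf k).2.
have := normc_rev (Fv e u) (Fv e (qv R (finfun f))).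
rewrite /η in hKd2; lra.
Qed.

Definition cRe (R : realType) (z : R[i]) : R := let: a +i* _ := z in a.
Definition cIm (R : realType) (z : R[i]) : R := let: _ +i* b := z in b.

Definition mC (dT : measure_display) (T : measurableType dT) (R : realType) (f : T -> R[i]) :=
  measurable_fun setT (fun t => cRe (f t)) /\ measurable_fun setT (fun t => cIm (f t)).

Lemma mC_cst (dT : measure_display) (T : measurableType dT) (R : realType) (c : R[i]) :
  mC (fun _ : T => c).
Proof. by split; apply: measurable_cst. Qed.

Lemma mC_add (dT : measure_display) (T : measurableType dT) (R : realType) (f g : T -> R[i]) :
  mC f -> mC g -> mC (fun t => f t + g t).
Proof.
move=> [f1 f2] [g1 g2]; rewrite /mC.
have -> : (fun t => cRe (f t + g t)) = (fun t => cRe (f t)) \+ (fun t => cRe (g t)).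
  by apply: funext => t /=; case: (f t) => ? ?; case: (g t).
have -> : (fun t => cIm (f t + g t)) = (fun t => cIm (f t)) \+ (fun t => cIm (g t)).
  by apply: funext => t /=; case: (f t) => ? ?; case: (g t).
by split; apply: measurable_realfun.measurable_funD.
Qed.

Lemma mC_mul (dT : measure_display) (T : measurableType dT) (R : realType) (f g : T -> R[i]) :
  mC f -> mC g -> mC (fun t => f t * g t).
Proof.
move=> [f1 f2] [g1 g2]; rewrite /mC.
have -> : (fun t => cRe (f t * g t)) = ((fun t => cRe (f t)) \* (fun t => cRe (g t))) \-
     ((fun t => cIm (f t)) \* (fun t => cIm (g t))).
  by apply: funext => t /=; case: (f t) => ? ?; case: (g t).
have -> : (fun t => cIm (f t * g t)) = ((fun t => cRe (f t)) \* (fun t => cIm (g t))) \+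
     ((fun t => cIm (f t)) \* (fun t => cRe (g t))).
  by apply: funext => t /=; case: (f t) => ? ?; case: (g t).
split.
  by apply: measurable_realfun.measurable_funB; apply: measurable_realfun.measurable_funM.
by apply: measurable_realfun.measurable_funD; apply: measurable_realfun.measurable_funM.
Qed.

Lemma mC_real (dT : measure_display) (T : measurableType dT) (R : realType) (g : T -> R) :
  measurable_fun setT g -> mC (fun t => (g t)%:C).
Proof. by move=> hg; split => //=; apply: measurable_cst. Qed.

Lemma mC_prod (dT : measure_display) (T : measurableType dT) (R : realType) (I : Type) (s : seq I)
  (F : I -> T -> R[i]) : (forall i, mC (F i)) -> mC (fun t => \prod_(i <- s) F i t).
Proof.
move=> hF; elim: s => [|x s IH].
  have -> : (fun t => \prod_(i <- [::]) F i t) = (fun _ => 1) by apply: funext => t; rewrite big_nil.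
  exact: mC_cst.
have -> : (fun t => \prod_(i <- x :: s) F i t) = (fun t => F x t * \prod_(i <- s) F i t).
  by apply: funext => t; rewrite big_cons.
exact: mC_mul.
Qed.

Lemma mC_sum (dT : measure_display) (T : measurableType dT) (R : realType) (I : Type) (s : seq I)
  (F : I -> T -> R[i]) : (forall i, mC (F i)) -> mC (fun t => \sum_(i <- s) F i t).
Proof.
move=> hF; elim: s => [|x s IH].
  have -> : (fun t => \sum_(i <- [::]) F i t) = (fun _ => 0) by apply: funext => t; rewrite big_nil.
  exact: mC_cst.
have -> : (fun t => \sum_(i <- x :: s) F i t) = (fun t => F x t + \sum_(i <- s) F i t).
  by apply: funext => t; rewrite big_cons.
exact: mC_add.
Qed.

Lemma mC_Fv (dT : measure_display) (T : measurableType dT) (R : realType) n d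
  (ev : 'I_n -> 'I_d -> T -> R) (c : 'I_d -> R[i]) :
  (forall j k, measurable_fun setT (ev j k)) ->
  mC (fun t => Fv (fun j k => ev j k t) c).
Proof.
move=> hev; rewrite /Fv; apply: mC_prod => j; apply: mC_sum => k.
by apply: mC_mul; [apply: mC_real|apply: mC_cst].
Qed.

Lemma lt_sqrt (R : realType) (a X : R) : 0 <= a -> (a < Num.sqrt X) = (a ^+ 2 < X).
Proof.
move=> a0; have [hX|hX] := ltP 0 X.
  have ha : Num.sqrt (a ^+ 2) = a by rewrite sqrtr_sqr ger0_norm.
  by rewrite -{1}ha ltr_sqrt.
rewrite ler0_sqrtr //; apply/idP/idP => h; first lra.
have : 0 <= a ^+ 2 by apply: sqr_ge0.
lra.
Qed.

Lemma normc_ReIm (R : realType) (z : R[i]) : normc z = Num.sqrt (cRe z ^+ 2 + cIm z ^+ 2).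
Proof. by case: z. Qed.

Lemma mC_normc_gt (dT : measure_display) (T : measurableType dT) (R : realType) (f : T -> R[i]) (a : R) :
  0 <= a -> mC f -> measurable [set t | a < normc (f t)].
Proof.
move=> a0 [h1 h2].
have -> : [set t | a < normc (f t)] =
   ((fun t => cRe (f t)) \* (fun t => cRe (f t)) \+ (fun t => cIm (f t)) \* (fun t => cIm (f t)))
     @^-1` `]a ^+ 2, +oo[.
  apply/seteqP; split => t /=; rewrite normc_ReIm lt_sqrt // in_itv /= andbT !expr2 //.
have hm : measurable_fun setT ((fun t => cRe (f t)) \* (fun t => cRe (f t)) \+ (fun t => cIm (f t)) \* (fun t => cIm (f t))).
  by apply: measurable_realfun.measurable_funD; apply: measurable_realfun.measurable_funM.
by rewrite -[X in measurable X]setTI; apply: hm => //; exact: measurable_itv.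
Qed.

Lemma S_meas (dT : measure_display) (T : measurableType dT) (R : realType) n d
  (ev : 'I_n -> 'I_d -> T -> R) (a : R) : (0 < n)%N -> (0 < d)%N -> 0 <= a ->
  (forall j k, measurable_fun setT (ev j k)) ->
  measurable [set t | a < Gv (fun j k => ev j k t)].
Proof.
move=> hn hd a0 hev.
pose A (i : nat) : set T := match @unpickle {ffun 'I_d -> rat * rat} i with
  | Some p => if pselect (forall k, normc (qv R p k) <= 1)
              then [set t | a < normc (Fv (fun j k => ev j k t) (qv R p))] else set0
  | None => set0 end.
have -> : [set t | a < Gv (fun j k => ev j k t)] = \bigcup_i A i.
  apply/seteqP; split => t /=.
    move=> /(Gv_char _ _ hn hd) [p [hp1 hp2]]; exists (pickle p) => //.
    by rewrite /A pickleK; case: pselect.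
  move=> [i _]; rewrite /A; case: (unpickle i) => [p|] //; case: pselect => // hp /= h.
  by apply/(Gv_char _ _ hn hd); exists p.
apply: bigcupT_measurable => i; rewrite /A; case: unpickle => [p|]; last exact: measurable0.
case: pselect => ?; last exact: measurable0.
by apply: mC_normc_gt => //; apply: mC_Fv.
Qed.

Lemma mul_le_sqr (R : realType) (a b : R) : a * b <= (a ^+ 2 + b ^+ 2) / 2.
Proof. have := sqr_ge0 (a - b); rewrite !expr2; nra. Qed.

Lemma cs_ineq (R : realType) (I : finType) (y : I -> R) :
  (\sum_i y i) ^+ 2 <= #|I|%:R * \sum_i y i ^+ 2.
Proof.
rewrite expr2 mulr_suml.
under eq_bigr do rewrite mulr_sumr.
apply: (@le_trans _ _ (\sum_i \sum_j (y i ^+ 2 + y j ^+ 2) / 2)).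
  apply: ler_sum => i _; apply: ler_sum => j _.
  exact: mul_le_sqr.
have -> : \sum_i \sum_j (y i ^+ 2 + y j ^+ 2) / 2 =
   \sum_i (y i ^+ 2 *+ #|I| / 2 + (\sum_j y j ^+ 2) / 2).
  apply: eq_bigr => i _; rewrite -mulr_suml big_split /= sumr_const mulrDl //.
rewrite big_split /= -mulr_suml -mulr_suml sumr_const.
have hc : #|(xpredT : pred I)| = #|I| by apply: eq_card.
rewrite hc sumrMnl; set S := \sum_i y i ^+ 2; rewrite -[S *+ _]mulr_natl; lra.
Qed.

Definition sg (R : realType) (b : bool) : R := if b then 1 else -1.
Definition es (R : realType) n d (s : {ffun 'I_n * 'I_d -> bool}) : 'I_n -> 'I_d -> R :=
  fun j k => sg R (s (j, k)).
Definition wt (R : realType) n d (s : {ffun 'I_n * 'I_d -> bool}) (f : {ffun 'I_n -> 'I_d}) : R :=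
  \prod_(j < n) sg R (s (j, f j)).
Definition tp n d (f : {ffun 'I_n -> 'I_d}) : {ffun 'I_d -> 'I_n.+1} :=
  [ffun k => inord #|[pred j | f j == k]|].
Definition cf (R : realType) n d (s : {ffun 'I_n * 'I_d -> bool}) (a : {ffun 'I_d -> 'I_n.+1}) : R :=
  \sum_(f | tp f == a) wt R s f.

Lemma prod_tp (R : realType) n d (f : {ffun 'I_n -> 'I_d}) (u : 'I_d -> R[i]) :
  \prod_(j < n) u (f j) = \prod_(k < d) u k ^+ (tp f k).
Proof.
rewrite (partition_big f predT) //=; apply: eq_bigr => k _.
rewrite (eq_bigr (fun=> u k)); last by move=> j /eqP ->.
rewrite prodr_const /tp ffunE inordK //.
by rewrite ltnS; apply: leq_trans (max_card _) _; rewrite card_ord.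
Qed.

Lemma Fv_es (R : realType) n d (s : {ffun 'I_n * 'I_d -> bool}) (u : 'I_d -> R[i]) :
  Fv (es R s) u = \sum_a (cf R s a)%:C * \prod_(k < d) u k ^+ (a k).
Proof.
rewrite /Fv bigA_distr_bigA /= (partition_big (@tp n d) predT) //=.
apply: eq_bigr => a _; rewrite /cf rmorph_sum mulr_suml; apply: eq_bigr => f /eqP <-.
by rewrite big_split /= rmorph_prod /wt prod_tp.
Qed.

Lemma Fv_es_le (R : realType) n d (s : {ffun 'I_n * 'I_d -> bool}) (u : 'I_d -> R[i]) :
  (forall k, `|u k| <= 1) -> normc (Fv (es R s) u) <= \sum_a `|cf R s a|.
Proof.
move=> hu; rewrite -lec_normc rmorph_sum Fv_es.
apply: le_trans (ler_norm_sum _ _ _) _; apply: ler_sum => a _.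
rewrite normrM normcR; apply: ler_piMr; first by rewrite -normcR.
rewrite normr_prod; apply: prodr_ile1 => k _; rewrite normr_ge0 /= normrX.
by apply: exprn_ile1.
Qed.

Lemma sg_sq (R : realType) b : sg R b * sg R b = 1.
Proof. by case: b; rewrite /sg ?mulr1 ?mulrNN ?mulr1. Qed.

Lemma wt_orth (R : realType) n d (f g : {ffun 'I_n -> 'I_d}) :
  \sum_(s : {ffun 'I_n * 'I_d -> bool}) wt R s f * wt R s g =
  (f == g)%:R * #|{ffun 'I_n * 'I_d -> bool}|%:R.
Proof.
have [<-|fg] := eqVneq f g.
  rewrite mul1r (eq_bigr (fun _ => 1)) ?sumr_const //.
  by move=> s _; rewrite /wt -big_split /=; apply: big1 => j _; rewrite sg_sq.
rewrite mul0r.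
have : ~~ [forall j, f j == g j].
  by apply: contra fg => /forallP h; apply/eqP/ffunP => j; apply/eqP/h.
rewrite negb_forall => /existsP [j0 hj0].
pose flip (s : {ffun 'I_n * 'I_d -> bool}) : {ffun 'I_n * 'I_d -> bool} :=
  [ffun p => if p == (j0, f j0) then ~~ s p else s p].
have flipK : involutive flip.
  move=> s; apply/ffunP => p; rewrite !ffunE; case: eqP => // _; exact: negbK.
have hf : forall s, wt R (flip s) f = - wt R s f.
  move=> s; rewrite /wt (bigD1 j0) //= [in RHS](bigD1 j0) //= ffunE eqxx.
  rewrite (eq_bigr (fun j => sg R (s (j, f j)))); last first.
    by move=> j hj; rewrite ffunE xpair_eqE (negbTE hj).
  by case: (s (j0, f j0)); rewrite /sg /= ?mulNr ?opprK ?mul1r ?mulN1r.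
have hg : forall s, wt R (flip s) g = wt R s g.
  move=> s; rewrite /wt; apply: eq_bigr => j _; rewrite ffunE xpair_eqE.
  by case: (eqVneq j j0) => [->|hj] /=; rewrite ?(negbTE hj) // eq_sym (negbTE hj0).
set S := \sum_s _.
have hS : S = - S.
  rewrite {1}/S (reindex_inj (inv_inj flipK)) /= -sumrN; apply: eq_bigr => s _.
  by rewrite hf hg mulNr.
lra.
Qed.

Lemma sum_cf2 (R : realType) n d :
  \sum_(s : {ffun 'I_n * 'I_d -> bool}) \sum_a (cf R s a) ^+ 2 =
  #|{ffun 'I_n * 'I_d -> bool}|%:R * (d ^ n)%:R.
Proof.
set N : R := #|{ffun 'I_n * 'I_d -> bool}|%:R.
rewrite exchange_big /=.
transitivity (\sum_(f : {ffun 'I_n -> 'I_d}) N); last first.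
  have hc : #|(xpredT : pred {ffun 'I_n -> 'I_d})| = #|{ffun 'I_n -> 'I_d}| by apply: eq_card.
  by rewrite sumr_const hc card_ffun !card_ord mulr_natr.
rewrite [RHS](partition_big (@tp n d) predT) //=; apply: eq_bigr => a _.
rewrite /cf.
under eq_bigr do rewrite expr2 mulr_suml; rewrite exchange_big /=; apply: eq_bigr => f hf.
under eq_bigr do rewrite mulr_sumr; rewrite exchange_big /=.
under eq_bigr do rewrite wt_orth.
rewrite (bigD1 f) //= eqxx mul1r big1 ?addr0 // => g /andP[_ hg].
by rewrite eq_sym (negbTE hg) mul0r.
Qed.

Lemma Gv_le_B (R : realType) n d (s : {ffun 'I_n * 'I_d -> bool}) : (0 < d)%N ->
  Gv (es R s) <= \sum_a `|cf R s a|.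
Proof.
move=> hd; apply: ge_sup; first exact: (has_sup_Gv (es R s) hd).1.
move=> _ [u /= hu <-]; apply: Fv_es_le => k; exact: supnorm1_le.
Qed.

Lemma X_bound (R : realType) n d (s : {ffun 'I_n * 'I_d -> bool}) (a : R) : (0 < d)%N -> 0 <= a ->
  a < Gv (es R s) -> a ^+ 2 <= ((n.+1) ^ d)%:R * \sum_b (cf R s b) ^+ 2.
Proof.
move=> hd a0 h.
have h1 := @Gv_le_B R n d s hd.
have h2 := cs_ineq (fun b => `|cf R s b|).
rewrite card_ffun !card_ord in h2.
have -> : \sum_b cf R s b ^+ 2 = \sum_b `|cf R s b| ^+ 2.
  by apply: eq_bigr => b _; rewrite real_normK // num_real.
apply: le_trans h2; rewrite ler_sqr ?nnegrE //; last by apply: sumr_ge0.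
by apply: le_trans h1; apply: ltW.
Qed.

Lemma count_bad (R : realType) n d (a : R) : (0 < d)%N -> 0 <= a ->
  #|[set s : {ffun 'I_n * 'I_d -> bool} | a < Gv (es R s)]%SET|%:R * a ^+ 2 <=
  ((n.+1) ^ d)%:R * (#|{ffun 'I_n * 'I_d -> bool}|%:R * (d ^ n)%:R).
Proof.
move=> hd a0.
set B := [set s : {ffun 'I_n * 'I_d -> bool} | a < Gv (es R s)]%SET.
have -> : #|B|%:R * a ^+ 2 = \sum_(s in B) a ^+ 2 by rewrite sumr_const mulr_natl.
rewrite -sum_cf2 mulr_sumr.
rewrite big_mkcond /=; apply: ler_sum => s _.
case: ifP => [|_]; last by apply: mulr_ge0 => //; apply: sumr_ge0 => b _; apply: sqr_ge0.
by rewrite inE => h; apply: X_bound.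
Qed.

Lemma fsumT (R : realType) (T : finType) (F : T -> \bar R) :
  (\sum_(i \in [set: T]) F i = \sum_(i : T) F i)%E.
Proof.
rewrite (fsbigE (enum T)) ?enum_uniq //.
  rewrite big_enum_cond /=; apply: eq_bigl => i; by rewrite in_setT.
by move=> i _; rewrite mem_enum.
Qed.

Unset Implicit Arguments.
Set Strict Implicit.
Local Close Scope complex_scope.

Theorem lemma3p5 (dT : measure_display) (T : measurableType dT) (R : realType)
  (P : probability T R) (n d : nat) (hn : (0 < n)%N) (hd : (0 < d)%N)
  (eps : 'I_n -> 'I_d -> {RV P >-> R})
  (hind : mutually_independent P (fun jk : 'I_n * 'I_d => (eps jk.1 jk.2 : T -> R)))
  (hrad : forall j k, rademacher P (eps j k))
  (Rr : R) (hR : 0 < Rr) :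
  (P [set t | (2 * Rr < Fnorm (fun j k => (eps j k : T -> R)) t)%R]
    < ((24 * n%:R) ^+ d * d%:R ^+ n / Rr ^+ 2)%:E)%E.
Proof.
pose ev := fun j k => (eps j k : T -> R).
have hev : forall j k, measurable_fun setT (ev j k) by move=> j k; exact: measurable_funP.
pose a := 2 * Rr.
have a0 : 0 < a by rewrite /a; lra.
have -> : [set t | 2 * Rr < Fnorm (fun j k => (eps j k : T -> R)) t] =
    [set t | a < Gv (fun j k => ev j k t)] by [].
have Sm := S_meas hn hd (ltW a0) hev.
pose E (s : {ffun 'I_n * 'I_d -> bool}) : set T := \bigcap_(i in [set i | i \in [set: 'I_n * 'I_d]%SET]) (ev i.1 i.2 @^-1` [set sg R (s i)]).
have hEm : forall s, measurable (E s).
  move=> s; apply: fin_bigcap_measurable; first exact: finite_finset.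
  move=> i _; rewrite -[X in measurable X]setTI; apply: hev => //; exact: measurable_set1.
have hEt : forall s t, E s t -> forall j k, ev j k t = sg R (s (j, k)).
  by move=> s t h j k; apply: (h (j, k)); rewrite /= inE.
have hPE : forall s, P (E s) = ((2^-1) ^+ (n * d))%:E.
  move=> s; have := hind [set: 'I_n * 'I_d]%SET (fun i => [set sg R (s i)]) (fun i => measurable_set1 _).
  rewrite /= => h; rewrite /E /ev h.
  rewrite (eq_bigr (fun _ => (2^-1)%:E)); last first.
    move=> i _; have [h1 h2] := hrad i.1 i.2; by case: (s i); rewrite /sg.
  by rewrite prodEFin prodr_const cardsT card_prod !card_ord.
have sg_inj : injective (sg R).
  by case=> [] [] //; rewrite /sg => h; exfalso; lra.
have htriv : forall D, trivIset D E.
  move=> D s s' _ _ [t [h1 h2]]; apply/ffunP => [[j k]].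
  by apply: sg_inj; rewrite -(hEt _ _ h1) -(hEt _ _ h2).
have hN : (2^-1 : R) ^+ (n * d) *+ #|{ffun 'I_n * 'I_d -> bool}| = 1.
  rewrite card_ffun card_bool card_prod !card_ord -mulr_natr natrX -exprMn mulVf //.
  exact: expr1n.
pose U := \bigcup_(s in [set: {ffun 'I_n * 'I_d -> bool}]) E s.
have hUm : measurable U by apply: fin_bigcup_measurable => //; exact: finite_finset.
have hPU : P U = 1%E.
  rewrite /U measure_fin_bigcup //; last exact: finite_finset.
  rewrite fsumT (eq_bigr _ (fun s _ => hPE s)) sumEFin sumr_const.
  have hc : #|(xpredT : pred {ffun 'I_n * 'I_d -> bool})| = #|{ffun 'I_n * 'I_d -> bool}| by apply: eq_card.
  by rewrite hc hN.
have hPnU : P (~` U) = 0%E by rewrite probability_setC // hPU subee.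
pose B := [set s : {ffun 'I_n * 'I_d -> bool} | a < Gv (es R s)]%SET.
pose F (s : {ffun 'I_n * 'I_d -> bool}) : set T := if s \in B then E s else set0.
have hFm : forall s, measurable (F s).
  by move=> s; rewrite /F; case: ifP => _; [exact: hEm|exact: measurable0].
pose V := \bigcup_(s in [set: {ffun 'I_n * 'I_d -> bool}]) F s.
have hVm : measurable V by apply: fin_bigcup_measurable => //; exact: finite_finset.
have hsub : [set t | a < Gv (fun j k => ev j k t)] `<=` V `|` ~` U.
  move=> t /= ht; have [[s _ hs]|hnU] := pselect (U t); last by right.
  left; exists s => //; rewrite /F ifT //; rewrite inE.
  have -> : es R s = (fun j k => ev j k t).
    by apply/funext => j; apply/funext => k; rewrite (hEt s t hs).
  exact: ht.
pose c : R := 2^-1 ^+ (n * d).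
have hPV : P V = (#|B|%:R * c)%:E.
  rewrite /V measure_fin_bigcup //; last first.
  - move=> s s' _ _ [t [h1 h2]]; apply: (htriv setT s s') => //; exists t; split.
      by move: h1; rewrite /F; case: ifP.
    by move: h2; rewrite /F; case: ifP.
  - exact: finite_finset.
  rewrite fsumT (eq_bigr (fun s => (if s \in B then c else 0)%:E)); last first.
    by move=> s _; rewrite /F; case: ifP => _; [exact: hPE|exact: measure0].
  by rewrite sumEFin -big_mkcond sumr_const mulr_natl.
apply: (@le_lt_trans _ _ (P (V `|` ~` U))).
  apply: le_measure => //; rewrite inE //; exact: measurableU hVm (measurableC hUm).
apply: (@le_lt_trans _ _ (P V + P (~` U))%E).
  by apply: measureU2 => //; exact: measurableC hUm.
rewrite hPnU adde0 hPV lte_fin.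
have hcb : #|B|%:R * a ^+ 2 <= (n.+1 ^ d)%:R * (#|{ffun 'I_n * 'I_d -> bool}|%:R * (d ^ n)%:R) :=
  @count_bad R n d a hd (ltW a0).
have hN' : #|{ffun 'I_n * 'I_d -> bool}|%:R * c = 1 by rewrite mulr_natl.
have c0 : 0 <= c by rewrite exprn_ge0 // invr_ge0.
have hD : 0 < (d ^ n)%:R :> R by rewrite ltr0n expn_gt0 hd.
have hQ : 0 < (n.+1 ^ d)%:R :> R by rewrite ltr0n expn_gt0.
have hQZ : (n.+1 ^ d)%:R <= (24 * n%:R) ^+ d :> R.
  rewrite natrX; apply: lerXn2r; rewrite ?nnegrE ?ler0n ?mulr_ge0 //.
  rewrite -natrM ler_nat; lia.
have h1 : #|B|%:R * a ^+ 2 * c <= (n.+1 ^ d)%:R * (d ^ n)%:R.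
  apply: le_trans (ler_wpM2r c0 hcb) _.
  rewrite (_ : (n.+1 ^ d)%:R * (#|{ffun 'I_n * 'I_d -> bool}|%:R * (d ^ n)%:R) * c =
     (n.+1 ^ d)%:R * (d ^ n)%:R * (#|{ffun 'I_n * 'I_d -> bool}|%:R * c)); last by ring.
  by rewrite hN' mulr1.
have h2 : (n.+1 ^ d)%:R * (d ^ n)%:R <= (24 * n%:R) ^+ d * (d ^ n)%:R :> R.
  by rewrite ler_pM2r.
have hQD : 0 < (n.+1 ^ d)%:R * (d ^ n)%:R :> R by apply: mulr_gt0.
have e : #|B|%:R * a ^+ 2 * c = 4 * (#|B|%:R * c * Rr ^+ 2) by rewrite /a; ring.
rewrite e in h1.
rewrite ltr_pdivlMr ?exprn_gt0 // -natrX.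
lra.
Qed.
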